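(* For each fixed $h$, the function $n\mapsto M(n,h)=\frac{n+2-p_{min}(n+h)}{3}$ is non-decreasing in $n$.
   Context: A polyiamond is a planar shape formed by gluing together finitely many congruent (closed) equilateral triangles (tiles) of the regular triangular lattice along their edges: any two tiles that intersect meet in an entire edge, and the union has connected interior. The perimeter of a polyiamond is the number of lattice edges on its topological boundary, and $p_{min}(m)$ is the minimum perimeter over all polyiamonds with $m$ tiles. *)

(* Defs.v *)
From Stdlib Require Import ClassicalEpsilon.
From mathcomp Require Import all_boot all_order all_algebra.
Set Implicit Arguments. Unset Strict Implicit. Unset Printing Implicit Defensive.
Import Order.TTheory GRing.Theory Num.Theory.

(* In the skew basis
   e1 = (1,0), e2 = (1/2, sqrt 3/2), the tile (x, y, true) is the "up"
   triangle with vertices (x,y), (x+1,y), (x,y+1); the tile (x, y, false)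
   is the "down" triangle with vertices (x+1,y), (x,y+1), (x+1,y+1). *)
Definition tile := (int * int * bool)%type.

Definition nbrs (t : tile) : seq tile :=
  let: (x, y, up) := t in
  if up then [:: (x, y, false); (x - 1, y, false); (x, y - 1, false)]%R
  else [:: (x, y, true); (x + 1, y, true); (x, y + 1, true)]%R.

Definition adj (t u : tile) : bool := u \in nbrs t.

Definition polyiamond (P : seq tile) : Prop :=
  [/\ P != [::], uniq P &
      forall t u, t \in P -> u \in P ->
        exists p : seq tile, [/\ path adj t p, all (mem P) p & last t p = u]].

(* Perimeter: number of lattice edges on the boundary, i.e. edges of tiles of P
   whose other adjacent tile is not in P. *)
Definition perimeter (P : seq tile) : nat :=
  \sum_(t <- P) count (fun u => u \notin P) (nbrs t).

Definition is_pmin (m p : nat) : Prop :=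
  (exists P, [/\ polyiamond P, size P = m & perimeter P = p]) /\
  (forall P, polyiamond P -> size P = m -> p <= perimeter P).

(* p_min(m): the minimum perimeter over polyiamonds with m tiles
   (well defined for m >= 1). *)
Definition pmin (m : nat) : nat :=
  epsilon (inhabits 0%N) (fun p => is_pmin m p).

Definition M (n h : int) : rat :=
  
  let k : nat := absz (n + h)%R in
  ((((n + 2)%R)%:~R - (pmin k)%:R) / 3%:R)%R.

(* Main.v *)
Require Import Defs.
From mathcomp Require Import all_boot all_order all_algebra.
From Stdlib Require Import ClassicalEpsilon.
From mathcomp Require Import ring lra zify.
Import Order.TTheory GRing.Theory Num.Theory.
Local Open Scope ring_scope.

Definition key (t : tile) : int :=
  let: (x, y, b) := t in 2 * x + (~~ b)%:R.

Definition succ (t : tile) : tile :=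
  let: (x, y, b) := t in if b then (x, y, false) else (x + 1, y, true).

Lemma key_succ t : key (succ t) = key t + 1.
Proof. by case: t => [[x y] []] /=; ring. Qed.

Lemma exists_max (s : seq tile) : s != [::] ->
  exists2 u, u \in s & forall w, w \in s -> key w <= key u.
Proof.
elim: s => [//|a s IH] _.
case: (eqVneq s [::]) => [->|ns].
  by exists a; rewrite ?mem_head // => w; rewrite inE => /eqP ->.
have [u us Hu] := IH ns.
case: (lerP (key a) (key u)) => H.
  exists u; first by rewrite inE us orbT.
  by move=> w; rewrite inE => /orP [/eqP ->|/Hu].
exists a; first by rewrite mem_head.
move=> w; rewrite inE => /orP [/eqP ->//|/Hu Hw].
by apply: le_trans Hw (ltW H).
Qed.

Lemma succ_adj u : adj u (succ u).
Proof. by case: u => [[x y] []]; rewrite /adj /= !inE eqxx ?orbT. Qed.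

Lemma succ_adj' u : adj (succ u) u.
Proof.
case: u => [[x y] []]; rewrite /adj /= !inE ?eqxx //.
by rewrite addrK eqxx orbT.
Qed.

Lemma count_lt (T : eqType) (a b : pred T) (l : seq T) x :
  (forall y, a y -> b y) -> x \in l -> b x -> ~~ a x -> (count a l < count b l)%N.
Proof.
move=> ab; elim: l => [//|z l IH]; rewrite inE => /orP [/eqP <-|xl] bx nax /=.
  rewrite (negbTE nax) bx add0n add1n ltnS; exact: sub_count.
have := IH xl bx nax; have := ab z.
case: (a z); case: (b z) => /= H IHl.
- by rewrite !add1n ltnS.
- by have := H isT.
- by rewrite add0n add1n; apply: ltn_trans IHl _.
- by rewrite !add0n.
Qed.

Lemma extend P : polyiamond P -> exists v,
  [/\ polyiamond (v :: P), size (v :: P) = (size P).+1 &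
      (perimeter (v :: P) <= (perimeter P).+1)%N].
Proof.
case=> ne uq conn.
have [u uP Hu] := @exists_max P ne.
set v := succ u.
have vP : v \notin P.
  apply/negP => /Hu; rewrite key_succ => H.
  by move: (le_lt_trans H (ltrDl (key u) 1)); rewrite ltxx.
have subm : forall p, all (mem P) p -> all (mem (v :: P)) p.
  move=> p; apply: sub_all => z /= zP; by rewrite inE zP orbT.
exists v; split => //.
- split => //; first by rewrite /= vP uq.
  move=> t w; rewrite !inE => /orP [/eqP ->|tP] /orP [/eqP ->|wP].
  + by exists [::].
  + have [p [pp pa pl]] := conn u w uP wP.
    exists (u :: p); split => //=; first by rewrite succ_adj' pp.
    by rewrite inE uP orbT subm.
  + have [p [pp pa pl]] := conn t u tP uP.
    exists (rcons p v); split.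
    * by rewrite rcons_path pp pl succ_adj.
    * by rewrite all_rcons /= inE eqxx subm.
    * by rewrite last_rcons.
  + have [p [pp pa pl]] := conn t w tP wP.
    by exists p; split => //; apply: subm.
- rewrite /perimeter big_cons (big_rem u uP) /= (big_rem u uP) /=.
  have h1 : (count (fun z => z \notin v :: P) (nbrs v) <= 2)%N.
    have : (count (fun z => z \notin v :: P) (nbrs v) < size (nbrs v))%N.
      rewrite ltn_neqAle count_size andbT -all_count; apply/negP => /allP /(_ u (succ_adj' u)) /=.
      by rewrite inE uP orbT.
    have -> : size (nbrs v) = 3%N by rewrite /v; case: (u) => [[x y] []].
    by [].
  have h2 : (count (fun z => z \notin v :: P) (nbrs u) <
             count (fun z => z \notin P) (nbrs u))%N.
    apply: (@count_lt _ _ _ _ v) => //.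
    + by move=> z; rewrite inE negb_or => /andP [].
    + exact: succ_adj.
    + by rewrite mem_head.
  have h3 : (\sum_(y <- rem u P) count (fun z => z \notin v :: P) (nbrs y) <=
             \sum_(y <- rem u P) count (fun z => z \notin P) (nbrs y))%N.
    apply: leq_sum => i _; apply: sub_count => z /=.
    by rewrite inE negb_or => /andP [].
  have H := leq_add h1 (leq_add h2 h3).
  rewrite addSn addnS add2n ltnS in H; exact: H.
Qed.

Lemma exists_poly m : (0 < m)%N -> exists P, polyiamond P /\ size P = m.
Proof.
elim: m => [//|m IH] _.
case: m IH => [|m] IH.
  exists [:: (0, 0, true)]; split => //; split => //.
  move=> t w; rewrite !inE => /eqP -> /eqP ->; by exists [::].
have [P [pP sP]] := IH isT.
have [v [pv sv _]] := @extend P pP.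
by exists (v :: P); rewrite sv sP.
Qed.

Lemma pmin_spec m : (0 < m)%N -> is_pmin m (pmin m).
Proof.
move=> m0; rewrite /pmin; apply: epsilon_spec.
pose Q p := exists P, [/\ polyiamond P, size P = m & perimeter P = p].
pose pb p := if excluded_middle_informative (Q p) then true else false.
have pbP p : reflect (Q p) (pb p).
  rewrite /pb; case: excluded_middle_informative => H; by constructor.
have ex : exists p, pb p.
  have [P [pP sP]] := @exists_poly m m0.
  by exists (perimeter P); apply/pbP; exists P.
case: (ex_minnP ex) => p /pbP Qp minp.
exists p; split => // P pP sP.
by apply: minp; apply/pbP; exists P.
Qed.

Lemma pmin_succ k : (0 < k)%N -> (pmin k.+1 <= (pmin k).+1)%N.
Proof.
move=> k0.
have [[P [pP sP peP]] _] := @pmin_spec k k0.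
have [v [pv sv perv]] := @extend P pP.
have [_ H] := @pmin_spec k.+1 (ltn0Sn k).
have := H _ pv; rewrite sv sP => /(_ erefl) => H2.
by apply: leq_trans H2 _; rewrite -peP.
Qed.

Theorem lemma3 (h n : int) : 0 < n + h -> M n h <= M (n + 1) h.
Proof.
move=> hpos; rewrite /M.
have [k kE] : exists k : nat, n + h = k%:Z.
  by exists (absz (n + h)); rewrite gez0_abs // ltW.
have e2 : n + 1 + h = (k.+1)%:Z by rewrite -addn1 PoszD -kE addrAC.
rewrite e2 kE /=.
have k0 : (0 < k)%N by move: hpos; rewrite kE ltz_nat.
have H : ((pmin k.+1)%:R <= (pmin k)%:R + 1 :> rat).
  by rewrite natr1 ler_nat; exact: @pmin_succ k k0.
rewrite !intrD /=.
set a := (pmin k)%:R in H *; set b := (pmin k.+1)%:R in H *.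
set nn := n%:~R.
lra.
Qed.
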